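(* Let $F$ be a distribution on $[0,\infty)$ with unbounded support and let $\gamma\ge0$ satisfy $\varphi(\gamma)<\infty$. Let $G(du)=e^{\gamma u}F(du)/\varphi(\gamma)$. Then $$\liminf_{x\to\infty}\frac{\overline{G*G}(x)}{\overline{G}(x)}\ge\frac{1}{\varphi(\gamma)}\liminf_{x\to\infty}\frac{\overline{F*F}(x)}{\overline{F}(x)}$$ and $$\limsup_{x\to\infty}\frac{\overline{G*G}(x)}{\overline{G}(x)}\le\frac{1}{\varphi(\gamma)}\limsup_{x\to\infty}\frac{\overline{F*F}(x)}{\overline{F}(x)}.$$
   Context: $\overline{F}(x)=F(x,\infty)$ is the tail of $F$; $\varphi(\gamma)=\int_0^\infty e^{\gamma x}F(dx)$. *)

(* Defs.v *)
From HB Require Import structures.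
From mathcomp Require Import all_boot all_order all_algebra.
From mathcomp Require Import all_classical all_reals all_analysis.
Set Implicit Arguments. Unset Strict Implicit. Unset Printing Implicit Defensive.
Import Order.TTheory GRing.Theory Num.Theory.
Import numFieldNormedType.Exports.
Local Open Scope classical_set_scope.
Local Open Scope ring_scope.

Definition tail (R : realType) (F : probability (measurableTypeR R) R) (x : R)
  : \bar R := F `]x, +oo[%classic.

(* tail of the convolution F*G at x: (F (x) G){(u,v) | u + v > x}, i.e. the
   law of the sum of two independent variables with laws F and G. *)
Definition conv_tail (R : realType) (F G : probability (measurableTypeR R) R)
  (x : R) : \bar R := (F \x G)%E [set p | x < p.1 + p.2].

Definition mgf (R : realType) (F : probability (measurableTypeR R) R) (g : R)
  : \bar R := (\int[F]_(x in `[0%R, +oo[%classic) (expR (g * x))%:E)%E.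

Definition conv_ratio (R : realType) (F : probability (measurableTypeR R) R)
  (x : R) : \bar R := (fine (conv_tail F F x) / fine (tail F x))%:E.

(* Main.v *)
Require Import Defs.
From HB Require Import structures.
From mathcomp Require Import all_boot all_order all_algebra.
From mathcomp Require Import all_classical all_reals all_analysis.
From mathcomp Require Import measurable_realfun ring.
Import Order.TTheory GRing.Theory Num.Theory.
Import numFieldNormedType.Exports.
Set Implicit Arguments. Unset Strict Implicit. Unset Printing Implicit Defensive.
Local Open Scope classical_set_scope.
Local Open Scope ring_scope.

Lemma einf_transfer (R : realType) (f g : R -> \bar R) (k : R) : 0 < k ->
  (forall c : R, pinfty_nbhs R (fun x => (c%:E <= f x)%E) ->
                 pinfty_nbhs R (fun x => ((k*c)%:E <= g x)%E)) ->
  (k%:E * limf_einf f (pinfty_nbhs R) <= limf_einf g (pinfty_nbhs R))%E.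
Proof.
move=> k0 H.
rewrite -lee_pdivlMl //.
rewrite [X in (X <= _)%E]limf_einfE; apply: ge_ereal_sup => _ [V FV <-].
set e := ereal_inf _.
have key : forall c : R, (c%:E <= e)%E -> ((k*c)%:E <= limf_einf g (pinfty_nbhs R))%E.
  move=> c /ereal_infP ce.
  have : pinfty_nbhs R (fun x => (c%:E <= f x)%E).
    by apply: filterS FV => x Vx; apply: ce; exists x.
  move=> /H FW; rewrite limf_einfE; apply: le_ereal_sup_tmp.
  exists (ereal_inf (g @` (fun x => ((k*c)%:E <= g x)%E))); first by exists (fun x => ((k*c)%:E <= g x)%E).
  by apply/ereal_infP => _ [x + <-].
move: key; case: e => [r| |] key.
- by rewrite lee_pdivlMl // -EFinM; apply: key.
- have -> : limf_einf g (pinfty_nbhs R) = +oo%E.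
    case E: (limf_einf g (pinfty_nbhs R)) => [r| |] //.
    + have := key ((r + 1) / k) (leey _); rewrite E lee_fin mulrC -mulrA mulVf ?gt_eqF // mulr1.
      by rewrite gerDl ler10.
    + by have := key 0 (leey _); rewrite E.
  by rewrite gt0_muley // lte_fin invr_gt0.
- by rewrite leNye.
Qed.

Lemma esup_transfer (R : realType) (f g : R -> \bar R) (k : R) : 0 < k ->
  (forall c : R, pinfty_nbhs R (fun x => (f x <= c%:E)%E) ->
                 pinfty_nbhs R (fun x => (g x <= (k*c)%:E)%E)) ->
  (limf_esup g (pinfty_nbhs R) <= k%:E * limf_esup f (pinfty_nbhs R))%E.
Proof.
move=> k0 H.
have := @einf_transfer R (\- f)%E (\- g)%E k k0.
rewrite !limf_einfN muleN leeN2; apply => c Hc.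
have : pinfty_nbhs R (fun x => (f x <= (- c)%:E)%E).
  by apply: filterS Hc => x /= h; rewrite EFinN leeNr.
by move/H; apply: filterS => x /= h; rewrite leeNr -EFinN -mulrN.
Qed.

Lemma Schar (R : realType) (gam x y : R) : 0 <= gam ->
  (forall s, ~ (0 <= y /\ x < s /\ y < expR (gam * s))) \/
  exists2 m, x <= m & forall s, (0 <= y /\ x < s /\ y < expR (gam * s)) <-> m < s.
Proof.
move=> g0.
have [y0|y0] := ltP y 0.
  by left => s [].
have [->|gpos] := eqVneq gam 0.
  have [y1|y1] := ltP y 1.
    right; exists x => // s; rewrite mul0r expR0; split; first by case=> _ [].
    by move=> xs; do !split.
  by left => s [] _ [] _; rewrite mul0r expR0 ltNge y1.
have gp : 0 < gam by rewrite lt_neqAle eq_sym gpos.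
right.
have [->|ypos] := eqVneq y 0.
  exists x => // s; split; first by case=> _ [].
  by move=> xs; do !split => //; exact: expR_gt0.
have yp : 0 < y by rewrite lt_neqAle eq_sym ypos.
exists (Num.max x (ln y / gam)); first by rewrite le_max lexx.
move=> s; rewrite gt_max; split.
  case=> _ [xs ys]; rewrite xs /=.
  rewrite ltr_pdivrMr // mulrC -(expRK (gam * s)) ltr_ln ?posrE ?expR_gt0 //.
case/andP=> xs ys; do !split => //.
by move: ys; rewrite ltr_pdivrMr // mulrC -[X in _ < X -> _](expRK (gam * s)) ltr_ln ?posrE ?expR_gt0.
Qed.

Section dens.
Import HBNNSimple.
Local Open Scope ereal_scope.
Lemma density_change d (T : measurableType d) (R : realType)
  (nu mu : {measure set T -> \bar R}) (g : T -> \bar R) :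
  (forall x, 0 <= g x) -> (forall x, g x \is a fin_num) -> measurable_fun [set: T] g ->
  (forall A, measurable A -> nu A = \int[mu]_(x in A) g x) ->
  forall f E, (forall x, 0 <= f x) -> measurable E -> measurable_fun E f ->
  \int[mu]_(x in E) (f x * g x) = \int[nu]_(x in E) f x.
Proof.
move=> g0 gfin mg gint f E f0 mE mf.
pose h := nnsfun_approx mE mf.
have -> : \int[nu]_(x in E) f x =
    lim (\int[nu]_(x in E) (EFin \o h n) x @[n --> \oo]).
  have fE x : E x -> f x = lim ((EFin \o h n) x @[n --> \oo]).
    by move=> Ex; apply/esym/cvg_lim => //; exact: cvg_nnsfun_approx.
  under eq_integral => x /[!inE] /fE -> //.
  apply: monotone_convergence => //.
  - move=> n; apply/measurable_EFinP.
    by apply: (measurable_funS measurableT) => //; exact/measurable_funP.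
  - by move=> n x Ex //=; rewrite lee_fin.
  - by move=> x Ex a b ab; rewrite lee_fin; exact/lefP/nd_nnsfun_approx.
have -> : \int[mu]_(x in E) (f \* g) x =
    lim (\int[mu]_(x in E) ((EFin \o h n) \* g) x @[n --> \oo]).
  have fg x : E x -> f x * g x = lim (((EFin \o h n) \* g) x @[n --> \oo]).
    by move=> Ex; apply/esym/cvg_lim => //; apply: cvgeZr;
      [exact: gfin|exact: cvg_nnsfun_approx].
  under eq_integral => x /[!inE] /fg -> //.
  apply: monotone_convergence => [//| | |].
  - move=> n; apply/emeasurable_funM; apply/measurable_funTS.
      exact/measurable_EFinP.
    exact: mg.
  - by move=> n x Ex /=; rewrite mule_ge0 ?lee_fin ?g0.
  - by move=> x Ex a b ab/=; rewrite lee_wpmul2r ?lee_fin ?g0//; exact/lefP/nd_nnsfun_approx.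
suff suf n : \int[mu]_(x in E) ((EFin \o h n) x * g x) =
    \int[nu]_(x in E) (EFin \o h n) x.
  by under eq_fun do rewrite suf.
transitivity (\int[nu]_(x in E)
   (\sum_(y \in range (h n)) (y * \1_(h n @^-1` [set y]) x)%:E)); last first.
  by apply: eq_integral => t tE; rewrite /= fimfunE -fsumEFin.
have indich m r : measurable_fun E (fun x => (r * \1_(h m @^-1` [set r]) x)%:E).
  by apply: (measurable_comp measurableT) => //; exact: measurable_funM.
rewrite ge0_integral_fsum//; last by move=> m y Ey; exact: nnfun_muleindic_ge0.
transitivity (\int[mu]_(x in E) (\sum_(y \in range (h n))
    (y * \1_(h n @^-1` [set y]) x)%:E * g x)).
  under [RHS]eq_integral => x xE.
    rewrite -ge0_mule_fsuml => [|y]; last exact: nnfun_muleindic_ge0.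
    rewrite fsumEFin // -(fimfunE _ x); over.
  by [].
rewrite ge0_integral_fsum//; last 2 first.
  - move=> y; apply: emeasurable_funM => //; apply: measurable_funTS.
    exact: mg.
  - by move=> m y Ey; rewrite mule_ge0 ?g0// nnfun_muleindic_ge0.
apply: eq_fsbigr => r rhn.
under [RHS]eq_integral do rewrite EFinM.
rewrite integralZl_indic_nnsfun => //.
under eq_integral do rewrite EFinM -muleA.
rewrite ge0_integralZl//.
- under eq_integral do rewrite muleC.
  rewrite (eq_integral (g \_ (h n @^-1` [set r]))); last first.
    by move=> x xE; rewrite epatch_indic.
  by rewrite -integral_mkcondr -gint// integral_indic// setIC.
- apply: emeasurable_funM; first exact/measurable_EFinP.
  exact/measurable_funTS/mg.
- by move=> t Et; rewrite mule_ge0 ?lee_fin ?g0.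
- by move: rhn; rewrite inE => -[t _ <-]; rewrite lee_fin.
Qed.
End dens.

Local Open Scope ereal_scope.
Lemma mset_of_bool d (T : measurableType d) (b : T -> bool) :
  measurable_fun setT b -> measurable [set p | b p].
Proof.
move=> mb; have := mb measurableT [set true] I; rewrite setTI.
by congr measurable; apply/seteqP; split => p /=.
Qed.

Section layer.
Context d (T : measurableType d) (R : realType).
Variable mu : {sigma_finite_measure set T -> \bar R}.
Variables (h : T -> R) (gam x : R).
Hypothesis mh : measurable_fun setT h.

Definition LA := [set p : T * R | (0 <= p.2)%R /\ (x < h p.1)%R /\ (p.2 < expR (gam * h p.1))%R].

Lemma measurable_LA : measurable LA.
Proof.
have mh1 : measurable_fun setT (fun p : T * R => h p.1).
  exact: measurableT_comp.
have -> : LA = [set p | (0 <= p.2)%R] `&` [set p | (x < h p.1)%R] `&` [set p | (p.2 < expR (gam * h p.1))%R].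
  by apply/seteqP; split => p /=; [case=> a [b c]|case=> [[a b] c]].
apply: measurableI; first apply: measurableI.
- by apply: mset_of_bool; apply: measurable_fun_ler.
- by apply: mset_of_bool; apply: measurable_fun_ltr.
- apply: mset_of_bool; apply: measurable_fun_ltr => //.
  apply: measurableT_comp; first exact: measurable_expR.
  exact: measurable_funM.
Qed.

Lemma layer_cake : \int[mu]_t ((((x < h t)%R)%:R * expR (gam * h t))%R)%:E
  = \int[lebesgue_measure]_y mu (ysection LA y).
Proof.
have mA := measurable_LA.
have inner t : \int[lebesgue_measure]_y (\1_LA (t, y))%:E
    = ((((x < h t)%R)%:R * expR (gam * h t))%R)%:E.
  transitivity (\int[lebesgue_measure]_y (\1_(xsection LA t) y)%:E).
    by apply: eq_integral => y _; rewrite !indicE mem_xsection.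
  rewrite integral_indic //; last exact: measurable_xsection.
  rewrite setIT.
  case: (ltrP x (h t)) => xh.
    have -> : xsection LA t = [set` `[0%R, expR (gam * h t)[].
      apply/seteqP; split => y; rewrite /xsection /= inE /= in_itv /=.
        by case=> a [_ b]; apply/andP.
      by case/andP=> a b.
    etransitivity; first exact: lebesgue_measure_itv.
    by rewrite /= lte_fin expR_gt0 sube0 mul1r.
  have -> : xsection LA t = set0.
    apply/seteqP; split => y; rewrite /xsection /= inE /=; last by [].
    by case=> _ [] /= /lt_le_trans /(_ xh); rewrite ltxx.
  by rewrite measure0 mul0r.
transitivity (\int[mu]_t \int[lebesgue_measure]_y (\1_LA (t, y))%:E).
  by apply: eq_integral => t _; rewrite inner.
rewrite (@fubini_tonelli _ _ T (measurableTypeR R) R mu lebesgue_measure (fun p => (\1_LA p)%:E)) //; last first.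
  exact/measurable_EFinP/measurable_indic.
apply: eq_integral => y _.
transitivity (\int[mu]_t (\1_(ysection LA y) t)%:E).
  by apply: eq_integral => t _; rewrite !indicE mem_ysection.
by rewrite integral_indic // ?setIT //; exact: measurable_ysection.
Qed.
End layer.

Lemma ysection_LA d (T : measurableType d) (R : realType) (h : T -> R) (gam x y : R) :
  ysection (LA h gam x) y = [set t | (0 <= y)%R /\ (x < h t)%R /\ (y < expR (gam * h t))%R].
Proof. by apply/seteqP; split => t; rewrite /ysection /= inE. Qed.

Lemma compare_J d1 d2 (T1 : measurableType d1) (T2 : measurableType d2) (R : realType)
  (mu1 : {sigma_finite_measure set T1 -> \bar R})
  (mu2 : {sigma_finite_measure set T2 -> \bar R})
  (h1 : T1 -> R) (h2 : T2 -> R) (gam x0 x a b : R) :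
  measurable_fun setT h1 -> measurable_fun setT h2 -> (0 <= gam)%R -> (x0 <= x)%R ->
  (0 <= a)%R -> (0 <= b)%R ->
  (forall t, (x0 <= t)%R ->
     a%:E * mu1 [set s | (t < h1 s)%R] <= b%:E * mu2 [set s | (t < h2 s)%R]) ->
  a%:E * \int[mu1]_t ((((x < h1 t)%R)%:R * expR (gam * h1 t))%R)%:E
  <= b%:E * \int[mu2]_t ((((x < h2 t)%R)%:R * expR (gam * h2 t))%R)%:E.
Proof.
move=> mh1 mh2 g0 x0x a0 b0 H.
rewrite (layer_cake mu1 gam x mh1) (layer_cake mu2 gam x mh2).
have m1 := measurable_fun_ysection mu1 (measurable_LA gam x mh1).
have m2 := measurable_fun_ysection mu2 (measurable_LA gam x mh2).
rewrite -!ge0_integralZl_EFin //.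
apply: ge0_le_integral => //.
- by move=> y _; rewrite mule_ge0.
- exact: measurable_funeM.
- exact: measurable_funeM.
move=> y _; rewrite !ysection_LA.
case: (Schar x y g0) => [E|[m xm E]].
  have E1 : forall (T : Type) (h : T -> R), [set t | (0 <= y)%R /\ (x < h t)%R /\ (y < expR (gam * h t))%R] = set0.
    by move=> T h; apply/seteqP; split => t //= /E.
  by rewrite !E1 !measure0 !mule0.
have E1 : forall (T : Type) (h : T -> R), [set t | (0 <= y)%R /\ (x < h t)%R /\ (y < expR (gam * h t))%R] = [set t | (m < h t)%R].
  by move=> T h; apply/seteqP; split => t /= /E.
rewrite !E1; apply: H; exact: le_trans x0x xm.
Qed.

Section tilt.
Context (R : realType) (F G : probability (measurableTypeR R) R) (gam k : R).
Hypothesis k0 : (0 < k)%R.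
Hypothesis HG : forall A : set R, measurable A ->
  G A = (\int[F]_(u in A) (expR (gam * u))%:E) * k%:E.

Let g := fun u : R => (expR (gam * u) * k)%:E.
Let mg : measurable_fun setT g.
Proof.
apply/measurable_EFinP; apply: measurable_funM => //.
apply: measurableT_comp; first exact: measurable_expR.
exact: measurable_funM.
Qed.

Let mexp : measurable_fun setT (fun u : R => (expR (gam * u))%:E).
Proof.
apply/measurable_EFinP; apply: measurableT_comp; first exact: measurable_expR.
exact: measurable_funM.
Qed.

Let HG' A : measurable A -> G A = \int[F]_(u in A) g u.
Proof.
move=> mA; rewrite HG // /g.
under [RHS]eq_integral do rewrite EFinM.
rewrite ge0_integralZr //.
all: try (by rewrite lee_fin ltW).
all: try (by move=> u _; rewrite lee_fin expR_ge0).
exact: measurable_funTS.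
Qed.

Lemma tail_tilt x : tail G x =
  k%:E * \int[F]_u ((((x < u)%R)%:R * expR (gam * u))%R)%:E.
Proof.
rewrite /tail HG // muleC integral_mkcond; congr (_ * _).
apply: eq_integral => u _; rewrite epatch_indic /= indicE.
case: (ltP x u) => xu.
  rewrite mem_set /=; last by rewrite in_itv /= xu.
  by rewrite mule1 mul1r.
rewrite memNset /=; last by rewrite in_itv /= ltNge xu.
by rewrite mule0 mul0r.
Qed.

Lemma conv_tail_tilt x : conv_tail G G x =
  (k ^+ 2)%:E * \int[F \x F]_p ((((x < p.1 + p.2)%R)%:R * expR (gam * (p.1 + p.2)))%R)%:E.
Proof.
set S := [set p : measurableTypeR R * measurableTypeR R | (x < p.1 + p.2)%R].
have mS : measurable S.
  apply: mset_of_bool; apply: measurable_fun_ltr => //.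
  exact: measurable_funD.
transitivity (\int[G]_u G (xsection S u)); first by [].
transitivity (\int[G]_u \int[F]_v ((\1_S (u,v))%:E * g v)).
  apply: eq_integral => u _; rewrite HG'; last exact: measurable_xsection.
  rewrite integral_mkcond; apply: eq_integral => v _.
  by rewrite epatch_indic /= muleC !indicE mem_xsection.
have g0 u : 0 <= g u by rewrite lee_fin mulr_ge0 // ?expR_ge0 // ltW.
have mf : measurable_fun setT (fun p : measurableTypeR R * measurableTypeR R =>
    (\1_S p)%:E * g p.2).
  apply: emeasurable_funM; first exact/measurable_EFinP/measurable_indic.
  exact: measurableT_comp.
have f0 p : 0 <= (\1_S p)%:E * g p.2 by rewrite mule_ge0 // lee_fin.
transitivity (\int[F]_u ((\int[F]_v ((\1_S (u,v))%:E * g v)) * g u)).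
  symmetry; apply: (@density_change _ _ _ G F g) => //.
  - by move=> u; apply: integral_ge0 => v _; exact: f0.
  - exact: (measurable_fun_fubini_tonelli_F _ mf f0).
transitivity (\int[F]_u (\int[F]_v ((\1_S (u,v))%:E * g v * g u))).
  apply: eq_integral => u _; rewrite ge0_integralZr //.
  apply: (measurableT_comp (f := fun p => (\1_S p)%:E * g p.2) mf).
  exact: measurable_fun_pair.
transitivity (\int[F \x F]_p ((\1_S p)%:E * g p.2 * g p.1)).
  symmetry; apply: (fubini_tonelli1 (fun p => (\1_S p)%:E * g p.2 * g p.1)).
  - apply: emeasurable_funM => //; exact: measurableT_comp.
  - by move=> p; rewrite mule_ge0.
have hS p : ((x < p.1 + p.2)%R)%:R = \1_S p :> R.
  rewrite indicE; case: (ltP x (p.1 + p.2)%R) => h.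
    by rewrite mem_set.
  by rewrite memNset //=; apply/negP; rewrite -leNgt.
under [X in _ = _ * X]eq_integral do rewrite hS.
rewrite -ge0_integralZl_EFin //.
- apply: eq_integral => p _; rewrite /g -!EFinM; congr EFin.
  rewrite mulrDr expRD; ring.
- apply/measurable_EFinP; apply: measurable_funM; first exact: measurable_indic.
  apply: measurableT_comp; first exact: measurable_expR.
  by apply: measurable_funM => //; exact: measurable_funD.
- by rewrite exprn_ge0 // ltW.
Qed.
End tilt.

Lemma finE_of_mul (R : realType) (k : R) (e : \bar R) : (0 < k)%R ->
  (k%:E * e) \is a fin_num -> e \is a fin_num.
Proof.
move=> k0; case: e => [r| |] //=.
- by rewrite gt0_muley // lte_fin.
- by rewrite gt0_muleNy // lte_fin.
Qed.

Lemma itv_oy_set (R : realType) (t : R) : `]t, +oo[%classic = [set s : R | (t < s)%R].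
Proof. by apply/seteqP; split => s /=; rewrite in_itv /= andbT. Qed.

Lemma lt_indic (R : realType) (x u : R) :
  ((x < u)%R)%:R = \1_[set s : R | (x < s)%R] u :> R.
Proof.
rewrite indicE; case: (ltP x u) => h; first by rewrite mem_set.
by rewrite memNset //=; apply/negP; rewrite -leNgt.
Qed.

Lemma measurable_gt (R : realType) (x : R) :
  measurable ([set s : measurableTypeR R | (x < s)%R]).
Proof. by rewrite -itv_oy_set; exact: measurable_itv. Qed.

Lemma fin_prob d (T : measurableType d) (R : realType) (P : probability T R) (A : set T) :
  measurable A -> P A \is a fin_num.
Proof.
move=> mA; rewrite ge0_fin_numE //.
exact: le_lt_trans (probability_le1 P mA) (ltey _).
Qed.

Section main.
Context (R : realType) (F G : probability (measurableTypeR R) R) (gamma : R).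
Hypotheses (Fpos : forall x, 0 < tail F x) (g0 : (0 <= gamma)%R)
  (HG : forall A : set R, measurable A ->
     G A = ((\int[F]_(u in A) (expR (gamma * u))%:E) * ((fine (mgf F gamma))^-1)%:E)).

Let k := ((fine (mgf F gamma))^-1)%R.
Let JF x := \int[F]_u ((((x < u)%R)%:R * expR (gamma * u))%R)%:E.
Let JH x := \int[F \x F]_p ((((x < p.1 + p.2)%R)%:R * expR (gamma * (p.1 + p.2)))%R)%:E.

Let k0 : (0 < k)%R.
Proof.
have kge0 : (0 <= k)%R.
  by rewrite invr_ge0 fine_ge0 // integral_ge0 // => x _; rewrite lee_fin expR_ge0.
rewrite lt_neqAle kge0 andbT eq_sym; apply/negP => /eqP kk.
have h := HG measurableT; rewrite probability_setT -/k kk mule0 in h.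
by move: h => /eqP; rewrite eqe oner_eq0.
Qed.

Let tailG x : tail G x = k%:E * JF x := tail_tilt HG x.
Let convG x : conv_tail G G x = (k ^+ 2)%:E * JH x := conv_tail_tilt k0 HG x.

Let msum : measurable_fun setT (fun p : measurableTypeR R * measurableTypeR R => (p.1 + p.2)%R).
Proof. exact: measurable_funD. Qed.

Let mS t : measurable [set p : measurableTypeR R * measurableTypeR R | (t < p.1 + p.2)%R].
Proof. by apply: mset_of_bool; apply: measurable_fun_ltr. Qed.

Let JF_fin x : JF x \is a fin_num.
Proof. by apply: (finE_of_mul k0); rewrite -tailG; apply: fin_prob. Qed.

Let JH_fin x : JH x \is a fin_num.
Proof.
apply: (@finE_of_mul _ (k ^+ 2)); first by rewrite exprn_gt0.
by rewrite -convG; apply: fin_prob.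
Qed.

Let JF_ge0 x : (0 <= fine (JF x))%R.
Proof. by apply: fine_ge0; apply: integral_ge0 => u _; rewrite lee_fin mulr_ge0 ?expR_ge0. Qed.

Let JH_ge0 x : (0 <= fine (JH x))%R.
Proof. by apply: fine_ge0; apply: integral_ge0 => u _; rewrite lee_fin mulr_ge0 ?expR_ge0. Qed.

Let JF_pos x : (0 <= x)%R -> (0 < fine (JF x))%R.
Proof.
move=> x0; apply: fine_gt0; have /fin_numPlt/andP[_ ->] := JF_fin x; rewrite andbT.
apply: (lt_le_trans (Fpos x)).
rewrite /tail -(setIT `]x, +oo[%classic) -integral_indic //.
apply: ge0_le_integral => //.
- by apply/measurable_EFinP; apply: measurable_indic; exact: measurable_itv.
- apply/measurable_EFinP.
  under eq_fun do rewrite lt_indic.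
  apply: measurable_funM; first by apply: measurable_indic; exact: measurable_gt.
  apply: measurableT_comp; first exact: measurable_expR.
  exact: measurable_funM.
move=> u _; rewrite lee_fin indicE lt_indic indicE itv_oy_set.
case: (boolP (u \in _)) => h; last by rewrite mul0r.
rewrite mul1r; apply: le_trans (expR_ge1Dx _); rewrite lerDl.
apply: mulr_ge0 => //; apply: le_trans x0 _; apply: ltW.
by move: h; rewrite inE.
Qed.

Let rG x : (0 <= x)%R ->
  conv_ratio G x = (k * (fine (JH x) / fine (JF x)))%:E.
Proof.
move=> x0; rewrite /conv_ratio convG tailG !fineM //; congr EFin.
have := JF_pos x0; have := k0; move: (fine (JF x)) (fine (JH x)) => a b k0' a0.
rewrite /=; field; rewrite ?gt_eqF // ?k0' ?a0.
Qed.

Let Fb t := F [set s : measurableTypeR R | (t < s)%R].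
Let Hm t := (F \x F) [set p : measurableTypeR R * measurableTypeR R | (t < p.1 + p.2)%R].

Let Fb_fin t : Fb t \is a fin_num.
Proof. by apply: fin_prob; exact: measurable_gt. Qed.

Let Hm_fin t : Hm t \is a fin_num.
Proof. exact: fin_prob. Qed.

Let Fb_pos t : (0 < fine (Fb t))%R.
Proof.
apply: fine_gt0; have /fin_numPlt/andP[_ ->] := Fb_fin t; rewrite andbT.
by have := Fpos t; rewrite /tail itv_oy_set.
Qed.

Let rF t : conv_ratio F t = (fine (Hm t) / fine (Fb t))%:E.
Proof. by rewrite /conv_ratio /tail itv_oy_set. Qed.

Let mid : measurable_fun setT (fun u : measurableTypeR R => u).
Proof. exact: measurable_id. Qed.

Local Close Scope ereal_scope.
Lemma lower_sec (c : R) : pinfty_nbhs R (fun x => (c%:E <= conv_ratio F x)%E) ->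
  pinfty_nbhs R (fun x => ((k * c)%:E <= conv_ratio G x)%E).
Proof.
case: (leP c (0:R)) => c0.
  move=> _; exists (0 : R); split; first exact: num_real.
  move=> x x0; rewrite (rG (ltW x0)) lee_fin.
  apply: (@le_trans _ _ (0 : R)); first by rewrite pmulr_rle0.
  by rewrite mulr_ge0 ?divr_ge0 // ltW.
case=> M [_ HM]; exists (Num.max M (0 : R)); split; first exact: num_real.
move=> x; rewrite gt_max => /andP[Mx x0].
have hyp : forall t, x <= t -> (c%:E * Fb t <= 1%:E * Hm t)%E.
  move=> t xt; have := HM t (lt_le_trans Mx xt).
  rewrite rF lee_fin ler_pdivlMr // => h.
  rewrite mul1e -(fineK (Hm_fin t)) -(fineK (Fb_fin t)) -EFinM lee_fin.
  done.
have key : (c%:E * JF x <= 1%:E * JH x)%E.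
  apply: (@compare_J _ _ _ _ R F ((F \x F)%E : probability _ R) (fun u => u) (fun p => (p.1 + p.2)%R)
     gamma x x c 1 mid msum g0 (lexx x) (ltW c0) ler01 hyp).
move: key; rewrite mul1e -(fineK (JF_fin x)) -(fineK (JH_fin x)) -EFinM lee_fin => h.
rewrite (rG (ltW x0)) lee_fin ler_pM2l // ler_pdivlMr //.
exact: JF_pos (ltW x0).
Qed.

Lemma upper_sec (c : R) : pinfty_nbhs R (fun x => (conv_ratio F x <= c%:E)%E) ->
  pinfty_nbhs R (fun x => (conv_ratio G x <= (k * c)%:E)%E).
Proof.
case=> M [_ HM].
have c0 : (0 <= c)%R.
  have := HM (M + 1)%R; rewrite ltrDl ltr01 => /(_ isT).
  rewrite rF lee_fin; apply: le_trans.
  by rewrite divr_ge0 ?fine_ge0 // ltW.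
exists (Num.max M (0 : R)); split; first exact: num_real.
move=> x; rewrite gt_max => /andP[Mx x0].
have hyp : forall t, x <= t -> (1%:E * Hm t <= c%:E * Fb t)%E.
  move=> t xt; have := HM t (lt_le_trans Mx xt).
  rewrite rF lee_fin ler_pdivrMr // => h.
  by rewrite mul1e -(fineK (Hm_fin t)) -(fineK (Fb_fin t)) -EFinM lee_fin.
have key : (1%:E * JH x <= c%:E * JF x)%E.
  apply: (@compare_J _ _ _ _ R ((F \x F)%E : probability _ R) F (fun p => (p.1 + p.2)%R) (fun u => u)
     gamma x x 1 c msum mid g0 (lexx x) ler01 c0 hyp).
move: key; rewrite mul1e -(fineK (JF_fin x)) -(fineK (JH_fin x)) -EFinM lee_fin => h.
rewrite (rG (ltW x0)) lee_fin ler_pM2l // ler_pdivrMr //.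
exact: JF_pos (ltW x0).
Qed.

Local Open Scope classical_set_scope.
Local Open Scope ring_scope.
Lemma main_sec :
  ((((fine (mgf F gamma))^-1)%:E * limf_einf (conv_ratio F) (+oo%R : set_system R))
     <= limf_einf (conv_ratio G) (+oo%R : set_system R))%E /\
  (limf_esup (conv_ratio G) (+oo%R : set_system R)
     <= ((fine (mgf F gamma))^-1)%:E * limf_esup (conv_ratio F) (+oo%R : set_system R))%E.
Proof.
split.
- exact: (einf_transfer k0 lower_sec).
- exact: (esup_transfer k0 upper_sec).
Qed.
End main.
Local Close Scope ereal_scope.
Local Open Scope classical_set_scope.
Local Open Scope ring_scope.

Theorem lemma8 (R : realType) (F G : probability (measurableTypeR R) R) (gamma : R) :
  F `]-oo, 0[%classic = 0%E ->
  (forall x : R, (0 < tail F x)%E) ->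
  0 <= gamma ->
  (mgf F gamma < +oo)%E ->
  (forall A : set R, measurable A ->
     G A = ((\int[F]_(u in A) (expR (gamma * u))%:E) * ((fine (mgf F gamma))^-1)%:E)%E) ->
  ((((fine (mgf F gamma))^-1)%:E * limf_einf (conv_ratio F) (+oo%R : set_system R))
     <= limf_einf (conv_ratio G) (+oo%R : set_system R))%E /\
  (limf_esup (conv_ratio G) (+oo%R : set_system R)
     <= ((fine (mgf F gamma))^-1)%:E * limf_esup (conv_ratio F) (+oo%R : set_system R))%E.
Proof.
move=> _ Fpos g0 _ HG.
exact: (main_sec Fpos g0 HG).
Qed.
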